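(* For all $n\ge1$, the number of $2$-element faces of the broken circuit complex of $\mathcal{A}_n$ (with respect to the binary order) is \[ f_1(BC(\mathcal{A}_n))=2S(n+1,3)+3S(n+1,4). \]
   Context: For $n\ge1$, $\mathcal{A}_n$ is the resonance arrangement in $\mathbb{R}^n$ of hyperplanes $H_I=\{x:\sum_{i\in I}x_i=0\}$, $\emptyset\ne I\subseteq[n]$. Binary order: $H_I$ is encoded by $\sum_{j\in I}2^j$ and hyperplanes are linearly ordered by this number. A circuit is a minimally linearly dependent set of hyperplanes (of normal vectors $\chi_I$); a broken circuit is $C\setminus\{H\}$ with $C$ a circuit and $H$ its largest element. The broken circuit complex $BC(\mathcal{A})$ is the simplicial complex of subsets of $\mathcal{A}$ containing no broken circuit, and $f_1$ counts its faces with $2$ elements. $S(n,k)$ denotes the Stirling number of the second kind. *)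

(* Defs.v *)
From HB Require Import structures.
From mathcomp Require Import all_boot all_order all_algebra.
From mathcomp Require Import reals.

Set Implicit Arguments. Unset Strict Implicit. Unset Printing Implicit Defensive.
Import Order.TTheory GRing.Theory Num.Theory.
Local Open Scope ring_scope.

(* Ground set [n] is modelled as 'I_n = {0,...,n-1}; the hyperplane H_I is
   represented by the nonempty index set I : {set 'I_n}. *)

Definition hyps (n : nat) : {set {set 'I_n}} := [set I | I != set0].

Definition hcode (n : nat) (I : {set 'I_n}) : nat := (\sum_(j in I) 2 ^ j)%N.

(* normal vector chi_I in R^n *)
Definition chi (R : realType) (n : nat) (I : {set 'I_n}) : 'rV[R]_n :=
  \row_(j < n) (j \in I)%:R.

Definition hdependent (R : realType) (n : nat) (C : {set {set 'I_n}}) : bool :=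
  ~~ free [seq chi R X | X <- enum C].

Definition hcircuit (R : realType) (n : nat) (C : {set {set 'I_n}}) : bool :=
  [&& C \subset hyps n, hdependent R C &
      [forall D : {set {set 'I_n}}, (D \proper C) ==> ~~ hdependent R D]].

Definition hbroken (R : realType) (n : nat) (B : {set {set 'I_n}}) : bool :=
  [exists C : {set {set 'I_n}}, hcircuit R C &&
     [exists H in C, [forall H' in C, (hcode H' <= hcode H)%N] && (B == C :\ H)]].

Definition bc_face (R : realType) (n : nat) (S : {set {set 'I_n}}) : bool :=
  (S \subset hyps n) &&
  [forall B : {set {set 'I_n}}, hbroken R B ==> ~~ (B \subset S)].

Definition f1_BC (R : realType) (n : nat) : nat :=
  #|[set S : {set {set 'I_n}} | bc_face R S && (#|S| == 2)%N]|.

Fixpoint stirling2 (n k : nat) : nat :=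
  match n, k with
  | 0, 0 => 1
  | 0, _.+1 => 0
  | _.+1, 0 => 0
  | m.+1, l.+1 => (l.+1 * stirling2 m l.+1 + stirling2 m l)%N
  end.

(* Main.v *)
Require Import Defs.
From mathcomp Require Import all_boot all_order all_algebra.
From mathcomp Require Import reals.
From mathcomp Require Import ring lra zify.

Set Implicit Arguments. Unset Strict Implicit. Unset Printing Implicit Defensive.
Import Order.TTheory GRing.Theory Num.Theory.

Section S.
Variables (R : realType) (n : nat).
Local Open Scope ring_scope.

Lemma chiE (X : {set 'I_n}) j : chi R X 0 j = if j \in X then 1 else 0.
Proof. by rewrite mxE; case: (j \in X). Qed.

Lemma chi_neq0 (X : {set 'I_n}) : X != set0 -> chi R X != 0.
Proof.
case/set0Pn => j Hj; apply/eqP => E.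
have := congr1 (fun M : 'rV[R]_n => M 0 j) E; rewrite chiE mxE Hj /=.
by move/eqP; rewrite oner_eq0.
Qed.

Lemma chi_line (X Y : {set 'I_n}) k : X != set0 -> chi R X = k *: chi R Y -> X = Y.
Proof.
case/set0Pn => j0 Hj0 E.
have pt j : (if j \in X then 1 else 0) = k * (if j \in Y then 1 else 0) :> R.
  by have := congr1 (fun M : 'rV[R]_n => M 0 j) E; rewrite mxE; rewrite /chi !mxE; case: (j \in X); case: (j \in Y).
have := pt j0; rewrite Hj0; case: (j0 \in Y) => /= h; last by clear E; exfalso; lra.
apply/setP => j; have := pt j.
by case: (j \in X); case: (j \in Y) => //= h'; clear E; exfalso; lra.
Qed.

Lemma span1 (v : 'rV[R]_n) : (<<[:: v]>> = <[v]>)%VS.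
Proof. by rewrite span_cons span_nil addv0. Qed.

Lemma free2 (X Y : {set 'I_n}) : X != set0 -> Y != set0 -> X != Y ->
  free [:: chi R X; chi R Y].
Proof.
move=> hX hY hXY; rewrite free_cons seq1_free chi_neq0 // andbT span1.
apply/vlineP => -[k Hk]; move/eqP: hXY; apply; exact: chi_line Hk.
Qed.


Lemma enum3 (X Y Z : {set 'I_n}) : X != Y -> X != Z -> Y != Z ->
  perm_eq (enum [set X; Y; Z]) [:: X; Y; Z].
Proof.
move=> hXY hXZ hYZ; apply: uniq_perm; first exact: enum_uniq.
  by rewrite /= !inE negb_or hXY hXZ hYZ.
by move=> W; rewrite mem_enum !inE orbA.
Qed.

Lemma enum2 (X Y : {set 'I_n}) : X != Y ->
  perm_eq (enum [set X; Y]) [:: X; Y].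
Proof.
move=> hXY; apply: uniq_perm; first exact: enum_uniq.
  by rewrite /= !inE hXY.
by move=> W; rewrite mem_enum !inE.
Qed.

Lemma free_set (D : {set {set 'I_n}}) : D \subset hyps n -> (#|D| <= 2)%N ->
  ~~ hdependent R D.
Proof.
move=> hD; rewrite /hdependent negbK.
have hyp X : X \in D -> X != set0.
  by move=> /(subsetP hD); rewrite inE.
rewrite leq_eqVlt ltnS leq_eqVlt ltnS leqn0.
case/orP => [|/orP[|]].
- case/cards2P => X [Y [hXY E]]; subst D.
  rewrite (perm_free (perm_map _ (enum2 hXY))) free2 //.
    by apply: hyp; rewrite !inE eqxx.
  by apply: hyp; rewrite !inE eqxx orbT.
- case/cards1P => X E; subst D.
  by rewrite enum_set1 /= seq1_free chi_neq0 // hyp // inE.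
- move/eqP/cards0_eq => ->; by rewrite enum_set0 nil_free.
Qed.

Lemma dep3 (X Y Z : {set 'I_n}) : X != set0 -> Y != set0 -> Z != set0 ->
  X != Y -> X != Z -> Y != Z -> hdependent R [set X; Y; Z] ->
  exists a b : R, chi R X = a *: chi R Y + b *: chi R Z.
Proof.
move=> h1 h2 h3 hXY hXZ hYZ.
rewrite /hdependent (perm_free (perm_map _ (enum3 hXY hXZ hYZ))) /=.
rewrite free_cons free2 // andbT negbK span_cons span1.
case/memv_addP => u /vlineP [a ->] [v /vlineP [b ->] ->].
by exists a, b.
Qed.

Definition ptw (X Y Z : {set 'I_n}) (a b : R) := forall j,
  (if j \in X then 1 else 0) = a * (if j \in Y then 1 else 0) + b * (if j \in Z then 1 else 0) :> R.

Definition concl (X Y Z : {set 'I_n}) :=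
  ([disjoint Y & Z] /\ X = Y :|: Z) \/ ([disjoint X & Z] /\ Y = X :|: Z)
  \/ ([disjoint X & Y] /\ Z = X :|: Y).

Ltac ptac h j X Y Z := have := h j; case: (j \in X); case: (j \in Y); case: (j \in Z) => /= ? //; exfalso; lra.

Lemma core (X Y Z : {set 'I_n}) a b (h : ptw X Y Z a b) j2 :
  j2 \in Z -> j2 \notin Y -> X != set0 -> Y != set0 -> X != Y -> X != Z ->
  concl X Y Z.
Proof.
move=> Hz Hy hX hY hXY hXZ.
have hb : b = 0 \/ b = 1.
  have := h j2; rewrite Hz (negbTE Hy); case: (j2 \in X) => /= E; [right|left]; lra.
case/set0Pn: hX => j0 Hj0.
have eXY : a = 1 -> b = 0 -> False.
  move=> ha hb'; move/eqP: hXY; apply; apply/setP => j; ptac h j X Y Z.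
have eXZ : a = 0 -> b = 1 -> False.
  move=> ha hb'; move/eqP: hXZ; apply; apply/setP => j; ptac h j X Y Z.
have e00 : a = 0 -> b = 0 -> False.
  move=> ha hb'; have := h j0; rewrite Hj0; case: (j0 \in Y); case: (j0 \in Z) => /= ?; lra.
case: (set_0Vmem (Y :\: Z)) => [/eqP E | [j1]].
  rewrite setD_eq0 in E; case/set0Pn: hY => jy Hy'.
  have Hz' := subsetP E _ Hy'.
  have hab : a + b = 0 \/ a + b = 1.
    have := h jy; rewrite Hy' Hz'; case: (jy \in X) => /= E'; [right|left]; lra.
  case: hb => hb.
    case: hab => hab; exfalso; [apply: e00|apply: eXY]; lra.
  case: hab => hab; last by exfalso; apply: eXZ; lra.
  right; right; split.
    apply/pred0P => j /=; ptac h j X Y Z.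
  apply/setP => j; rewrite !inE; ptac h j X Y Z.
rewrite !inE => /andP [Hz1 Hy1].
have ha : a = 0 \/ a = 1.
  have := h j1; rewrite Hy1 (negbTE Hz1); case: (j1 \in X) => /= E; [right|left]; lra.
case: ha => ha; case: hb => hb.
- by exfalso; apply: e00.
- by exfalso; apply: eXZ.
- by exfalso; apply: eXY.

left; split.
  apply/pred0P => j /=; ptac h j X Y Z.
apply/setP => j; rewrite !inE; ptac h j X Y Z.
Qed.

Lemma core_all (X Y Z : {set 'I_n}) a b (h : ptw X Y Z a b) :
  X != set0 -> Y != set0 -> Z != set0 -> X != Y -> X != Z -> Y != Z ->
  concl X Y Z.
Proof.
move=> hX hY hZ hXY hXZ hYZ.
case: (set_0Vmem (Z :\: Y)) => [/eqP E | [j2]]; last first.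
  by rewrite !inE => /andP[Hy Hz]; apply: (core h Hz Hy).
case: (set_0Vmem (Y :\: Z)) => [/eqP E' | [j1]].
  by exfalso; move/eqP: hYZ; apply; apply/eqP; rewrite eqEsubset -!setD_eq0 E E'.
rewrite !inE => /andP[Hz Hy].
have h' : ptw X Z Y b a by move=> j; rewrite h addrC.
case: (core h' Hy Hz hX hZ hXZ hXY) => [[d e]|[[d e]|[d e]]].
- by left; rewrite disjoint_sym setUC.
- by right; right.
- by right; left.
Qed.

Lemma hcode_disj (A B : {set 'I_n}) : [disjoint A & B] ->
  hcode (A :|: B) = (hcode A + hcode B)%N.
Proof.
move=> d; rewrite /hcode -bigU //=; apply: eq_bigl => j; by rewrite !inE.
Qed.

Lemma hcode_pos (A : {set 'I_n}) : A != set0 -> (0 < hcode A)%N.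
Proof.
case/set0Pn => j Hj; rewrite /hcode (bigD1 j) //=.
by rewrite -[X in (X < _)%N]/(0 + 0)%N ltn_addr // expn_gt0.
Qed.

Lemma ptw_of (X Y Z : {set 'I_n}) (a b : R) :
  chi R X = a *: chi R Y + b *: chi R Z -> ptw X Y Z a b.
Proof.
move=> E j; have := congr1 (fun M : 'rV[R]_n => M 0 j) E.
rewrite /chi !mxE.
by case: (j \in X); case: (j \in Y); case: (j \in Z).
Qed.

Lemma KA (A B : {set 'I_n}) (B0 : {set {set 'I_n}}) :
  A != set0 -> B != set0 -> A != B -> hbroken R B0 -> B0 \subset [set A; B] ->
  [disjoint A & B].
Proof.
move=> hA hB hAB /existsP[C /andP[hc /existsP[H /andP[HC /andP[hmax /eqP EB0]]]]] sub.
case/and3P: hc => hCh hdep _.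
have c3 : (3 <= #|C|)%N.
  rewrite leqNgt ltnS; apply/negP => le2; move: hdep; apply/negP.
  exact: free_set.
have cB0 : (2 <= #|B0|)%N.
  by move: c3; rewrite (cardsD1 H C) HC EB0 add1n ltnS.
have EB : B0 = [set A; B].
  apply/eqP; rewrite eqEcard sub cards2 hAB //.
subst B0.
have HnA : H != A.
  apply/negP => /eqP e; have : A \in C :\ H by rewrite EB !inE eqxx.
  by rewrite !inE e eqxx.
have HnB : H != B.
  apply/negP => /eqP e; have : B \in C :\ H by rewrite EB !inE eqxx orbT.
  by rewrite !inE e eqxx.
have EC : C = [set H; A; B].
  by rewrite -{1}(setD1K HC) EB; apply/setP => x; rewrite !inE orbA.
have hH : H != set0 by move: (subsetP hCh _ HC); rewrite inE.
rewrite EC in hdep.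
case: (dep3 hH hA hB HnA HnB hAB hdep) => a [b E].
case: (core_all (ptw_of E) hH hA hB HnA HnB hAB) => [[d _]|[[d e]|[d e]]] //.
- have := forallP hmax A; rewrite EC !inE eqxx orbT /= e hcode_disj //.
  by rewrite -{2}[hcode H]addn0 leq_add2l leqn0 => /eqP h0; move: (hcode_pos hB); rewrite h0.
- have := forallP hmax B; rewrite EC !inE eqxx !orbT /= e hcode_disj //.
  by rewrite -{2}[hcode H]addn0 leq_add2l leqn0 => /eqP h0; move: (hcode_pos hA); rewrite h0.
Qed.

Lemma card3_le (X Y Z : {set 'I_n}) : (#|[set X; Y; Z]| <= 3)%N.
Proof.
have -> : [set X; Y; Z] = X |: [set Y; Z] by apply/setP => x; rewrite !inE orbA.
by rewrite cardsU1 cards2; case: (X \notin _); case: (Y != Z).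
Qed.

Lemma KB (A B : {set 'I_n}) : A != set0 -> B != set0 -> [disjoint A & B] ->
  hbroken R [set A; B].
Proof.
move=> hA hB d.
case/set0Pn: (hA) => ja Ha; case/set0Pn: (hB) => jb Hb.
have jbA : jb \notin A by rewrite (disjointFl d Hb).
have jaB : ja \notin B by rewrite (disjointFr d Ha).
have hU : A :|: B != set0 by apply/set0Pn; exists ja; rewrite inE Ha.
have hUA : A :|: B != A by apply/eqP => /setP /(_ jb); rewrite !inE Hb orbT (negbTE jbA).
have hUB : A :|: B != B by apply/eqP => /setP /(_ ja); rewrite !inE Ha (negbTE jaB).
have hAB : A != B by apply/eqP => /setP /(_ ja); rewrite Ha (negbTE jaB).
have hCh : [set A :|: B; A; B] \subset hyps n.
  by apply/subsetP => x; rewrite !inE -orbA => /or3P [] /eqP ->.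
apply/existsP; exists [set A :|: B; A; B]; apply/andP; split.
  apply/and3P; split => //.
    rewrite /hdependent (perm_free (perm_map _ (enum3 hUA hUB hAB))) /=.
    rewrite free_cons span_cons span1 negb_and negbK; apply/orP; left.
    apply/memv_addP; exists (chi R A); first exact: memv_line.
    exists (chi R B); first exact: memv_line.
    apply/matrixP => i j; rewrite !mxE !inE.
    case: (boolP (j \in A)) => hj /=.
      have jB : (j \in B) = false by apply: (disjointFr d hj).
      by rewrite jB addr0.
    by rewrite add0r.
  apply/forallP => D; apply/implyP => hD.
  apply: free_set; first exact: subset_trans (proper_sub hD) hCh.
  by rewrite -ltnS; apply: leq_trans (proper_card hD) (card3_le _ _ _).
apply/existsP; exists (A :|: B); rewrite !inE eqxx /=.
apply/andP; split.
  apply/forallP => H'; apply/implyP; rewrite !inE -orbA => /or3P [] /eqP ->;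
    rewrite ?hcode_disj ?leq_addr ?leq_addl //.
apply/eqP/setP => x; rewrite !inE.
case: (boolP (x == A)) => [/eqP -> | _]; first by rewrite (_ : (A == A :|: B) = false) ?orbT // eq_sym (negbTE hUA).
case: (boolP (x == B)) => [/eqP -> | _]; first by rewrite (_ : (B == A :|: B) = false) ?orbT // eq_sym (negbTE hUB).
by rewrite andbC orbF; case: (x == _).
Qed.

Lemma face_pair (A B : {set 'I_n}) : A != B ->
  bc_face R [set A; B] = (A :&: B != set0).
Proof.
move=> hAB; case: (boolP (A :&: B == set0)) => hI /=.
  apply/negP => /andP [hs hf].
  have hA : A != set0 by move: (subsetP hs A); rewrite !inE eqxx => /(_ isT).
  have hB : B != set0 by move: (subsetP hs B); rewrite !inE eqxx orbT => /(_ isT).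
  have := forallP hf [set A; B]; rewrite KB // ?subxx //.
  by rewrite -setI_eq0.
have hA : A != set0.
  by apply: contraNneq hI => ->; rewrite set0I.
have hB : B != set0.
  by apply: contraNneq hI => ->; rewrite setI0.
apply/andP; split.
  by apply/subsetP => x; rewrite !inE => /orP [] /eqP ->.
apply/forallP => B0; apply/implyP => hb; apply/negP => hsub.
have := KA hA hB hAB hb hsub; rewrite -setI_eq0.
by rewrite (negbTE hI).
Qed.

Definition Pp := [set p : {set 'I_n} * {set 'I_n} | (p.1 != p.2) && (p.1 :&: p.2 != set0)].

Lemma countP : #|Pp| = (2 * f1_BC R n)%N.
Proof.
rewrite /f1_BC -sum1_card.
rewrite (partition_big (fun p : {set 'I_n} * {set 'I_n} => [set p.1; p.2])
   (mem [set S | bc_face R S && (#|S| == 2)])) /=; last first.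
  move=> [p1 p2]; rewrite !inE /= => /andP [h1 h2].
  by rewrite face_pair // h2 cards2 h1.
rewrite mulnC -sum_nat_const; apply: eq_bigr => S.
rewrite inE => /andP [hf /cards2P [A [B [hAB ES]]]]; subst S.
rewrite face_pair // in hf.
rewrite sum1_card; transitivity #|[set (A, B); (B, A)]|; last first.
  by rewrite cards2 xpair_eqE negb_and hAB.
apply: eq_card => [[p1 p2]]; rewrite unfold_in /= !inE /= !xpair_eqE.
apply/idP/idP.
  case/andP => /andP [h12 _] /eqP E.
  have : p1 \in [set A; B] by rewrite -E !inE eqxx.
  have : p2 \in [set A; B] by rewrite -E !inE eqxx orbT.
  rewrite !inE => /orP [] /eqP e2 /orP [] /eqP e1; subst p1 p2;
    first [by rewrite ?eqxx ?orbT ?andbT | by rewrite eqxx in h12].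
case/orP => /andP [/eqP -> /eqP ->]; rewrite ?hAB ?hf //=.
by rewrite eq_sym hAB setIC hf /=; apply/eqP/setP => x; rewrite !inE orbC.
Qed.

Lemma card_sets : #|{set 'I_n}| = (2 ^ n)%N.
Proof. by rewrite -cardsT -powersetT card_powerset cardsT card_ord. Qed.

Definition Qq := [set p : {set 'I_n} * {set 'I_n} | p.1 :&: p.2 != set0].

Lemma card_diag : #|Qq :&: [set p | p.1 == p.2]| = (2 ^ n).-1.
Proof.
have -> : Qq :&: [set p | p.1 == p.2] =
    [set (A, A) | A in [set~ (set0 : {set 'I_n})]].
  apply/setP => [[p1 p2]]; rewrite !inE /=.
  apply/idP/imsetP.
    case/andP => h /eqP e; subst p2; exists p1 => //.
    by rewrite !inE; rewrite setIid in h.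
  by case=> A; rewrite !inE => hA [-> ->]; rewrite setIid hA eqxx.
rewrite card_imset; last by move=> A B [].
by rewrite cardsC1 card_sets.
Qed.

Lemma card_Pp : (#|Pp| + (2 ^ n).-1)%N = #|Qq|.
Proof.
rewrite -card_diag -(cardsID [set p | p.1 == p.2] Qq) addnC; congr (_ + _)%N.
apply: eq_card => [[p1 p2]]; rewrite !inE /= andbC.
by [].
Qed.

Definition o0 : 'I_3 := @Ordinal 3 0 isT.
Definition o1 : 'I_3 := @Ordinal 3 1 isT.
Definition o2 : 'I_3 := @Ordinal 3 2 isT.

Definition gf (f : {ffun 'I_n -> 'I_3}) : {set 'I_n} * {set 'I_n} :=
  ([set i | f i == o0], [set i | f i == o1]).

Lemma gf_inj : injective gf.
Proof.
move=> f1 f2 [/setP E0 /setP E1]; apply/ffunP => i.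
move: (E0 i) (E1 i); rewrite !inE.
case: (f1 i) => [[|[|[|k]]] h1]; case: (f2 i) => [[|[|[|l]]] h2] //=;
  by rewrite /o0 /o1 => //=; move=> *; apply: val_inj.
Qed.

Lemma card_disj : #|~: Qq| = (3 ^ n)%N.
Proof.
have -> : ~: Qq = [set gf f | f in [set: {ffun 'I_n -> 'I_3}]].
  apply/setP => [[A B]]; rewrite !inE /= negbK.
  apply/idP/imsetP.
    move=> /eqP hI.
    exists [ffun i => if i \in A then o0 else if i \in B then o1 else o2]; first by rewrite inE.
    rewrite /gf; apply/eqP; rewrite xpair_eqE; apply/andP; split; apply/eqP/setP => i; rewrite !inE ffunE.
      by case: (i \in A); case: (i \in B).
    case: (boolP (i \in A)) => hA; last by case: (i \in B).
    have : i \in A :&: B = false by rewrite hI inE.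
    by rewrite inE hA /= => ->.
  case=> f _ [-> ->]; apply/eqP/setP => i; rewrite !inE.
  by case: (eqVneq (f i) o0) => [->|].

by rewrite card_imset ?cardsT ?card_ffun ?card_ord //; exact: gf_inj.
Qed.
End S.

Lemma st1 m : stirling2 m.+1 1 = 1%N.
Proof. elim: m => // m IH. rewrite [stirling2 _ _]/= -/(stirling2 m.+1 1) IH. by case: m {IH}. Qed.

Lemma st2 m : (stirling2 m.+1 2 + 1 = 2 ^ m)%N.
Proof.
elim: m => // m IH.
rewrite [stirling2 _ _]/= -/(stirling2 m.+1 2) -/(stirling2 m.+1 1) st1 expnS.
lia.
Qed.

Lemma st3 m : (2 * stirling2 m.+1 3 + 2 ^ m.+1 = 3 ^ m + 1)%N.
Proof.
elim: m => // m IH.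
rewrite [stirling2 _ _]/= -/(stirling2 m.+1 3) -/(stirling2 m.+1 2).
have := st2 m; rewrite !expnS in IH *; lia.
Qed.

Lemma st4 m : (6 * stirling2 m.+1 4 + 3 ^ m.+1 + 1 = 4 ^ m + 3 * 2 ^ m)%N.
Proof.
elim: m => // m IH.
rewrite [stirling2 _ _]/= -/(stirling2 m.+1 4) -/(stirling2 m.+1 3).
have := st3 m; rewrite !expnS in IH *; lia.
Qed.

Theorem proposition6p1 (R : realType) (n : nat) :
  (1 <= n)%N ->
  f1_BC R n = (2 * stirling2 n.+1 3 + 3 * stirling2 n.+1 4)%N.
Proof.
move=> _.
have h1 := countP R n.
have h2 := card_Pp n.
have h3 := cardsC (Qq n).
rewrite card_prod card_sets card_disj in h3.
have h4 := st3 n; have h5 := st4 n.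
have e4 : (4 ^ n = 2 ^ n * 2 ^ n)%N by rewrite -expnMn.
have hp : (0 < 2 ^ n)%N by rewrite expn_gt0.
rewrite e4 expnS in h4 h5 *.
rewrite expnS in h5.
lia.
Qed.
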